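(* Let $U\subseteq(\Sigma\Gamma)^*$ be a regular $(\Sigma\Gamma)^*$-prefix closed set and $T=U\Sigma^*\Gamma^*$. Then $\mathit{maxsync}(T,T)$ is regular.
   Context: $\Sigma,\Gamma$ are disjoint finite alphabets. A set $U\subseteq(\Sigma\Gamma)^*$ is $(\Sigma\Gamma)^*$-prefix closed if $uab\in U$ implies $u\in U$ for all $u\in(\Sigma\Gamma)^*$, $a\in\Sigma$, $b\in\Gamma$. For $w\in(\Sigma\cup\Gamma)^*$, $\llbracket w\rrbracket=(\pi_{\mathtt i}(w),\pi_{\mathtt o}(w))$ where $\pi_{\mathtt i}$ (resp. $\pi_{\mathtt o}$) deletes all letters of $\Gamma$ (resp. $\Sigma$). A shift of $w$ is a position $i\in\{1,\dots,|w|-1\}$ with exactly one of $w[i],w[i+1]$ in $\Sigma$, $\mathit{shift}(w)$ is the number of shifts, and $\mathrm{Reg}_{\mathsf{FS}}$ is the class of regular languages $L$ with $\sup_{w\in L}\mathit{shift}(w)<\infty$. For $x\in(\Sigma\cup\Gamma)^*$, $x^{-1}T=\{z:xz\in T\}$, and $w[1,i]$ is the prefix of $w$ of length $i$. For $w,w'\in T$ with $\llbracket w\rrbracket=\llbracket w'\rrbracket$, write $w\preceq_T w'$ if for all $i\le|w|$, $(w'[1,i])^{-1}T\in\mathrm{Reg}_{\mathsf{FS}}$ implies $(w[1,i])^{-1}T\in\mathrm{Reg}_{\mathsf{FS}}$. $\mathit{maxsync}(T,T)=\{w\in T:\ w'\preceq_T w\text{ for all }w'\in T\text{ with }\llbracket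 w'\rrbracket=\llbracket w\rrbracket\}$. *)

(* Defs.v *)
From mathcomp Require Import all_boot.
Set Implicit Arguments. Unset Strict Implicit. Unset Printing Implicit Defensive.

Section Words.
Variables (Sig Gam : finType).

Definition letter := (Sig + Gam)%type.
Definition word := seq letter.
Definition lang := word -> Prop.

Definition regular (L : lang) : Prop :=
  exists (Q : finType) (q0 : Q) (delta : Q -> letter -> Q) (F : pred Q),
    forall w, L w <-> F (foldl delta q0 w).

Definition isSig (c : letter) : bool := if c is inl _ then true else false.

Fixpoint inSG (w : word) : bool :=
  match w with
  | [::] => true
  | inl _ :: inr _ :: w' => inSG w'
  | _ => false
  end.

Definition SG_prefix_closed (U : lang) : Prop :=
  forall (u : word) (a : Sig) (b : Gam),
    inSG u -> U (u ++ [:: inl a; inr b]) -> U u.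

Definition TofU (U : lang) : lang :=
  fun w => exists (u : word) (v : seq Sig) (x : seq Gam),
    U u /\ w = u ++ map inl v ++ map inr x.

Definition proj_i (w : word) : seq Sig :=
  pmap (fun c : letter => if c is inl a then Some a else None) w.
Definition proj_o (w : word) : seq Gam :=
  pmap (fun c : letter => if c is inr b then Some b else None) w.
Definition sem (w : word) : seq Sig * seq Gam := (proj_i w, proj_o w).

Fixpoint shift (w : word) : nat :=
  match w with
  | a :: ((b :: _) as w') => (isSig a != isSig b) + shift w'
  | _ => 0
  end.

Definition RegFS (L : lang) : Prop :=
  regular L /\ exists k, forall w, L w -> shift w <= k.

Definition lquot (x : word) (T : lang) : lang := fun z => T (x ++ z).

Definition preceq (T : lang) (w w' : word) : Prop :=
  forall i, i <= size w ->
    RegFS (lquot (take i w') T) -> RegFS (lquot (take i w) T).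

Definition maxsync (T : lang) : lang :=
  fun w => T w /\ forall w', T w' -> sem w' = sem w -> preceq T w' w.

End Words.

(* Main.v *)
Require Import Defs.
From mathcomp Require Import all_boot.
From Stdlib Require Import Classical ClassicalDescription Lia.
From mathcomp Require Import zify.
Set Implicit Arguments. Unset Strict Implicit. Unset Printing Implicit Defensive.

Section Gen.
Variables (Sig Gam : finType).
Local Notation W := (seq (Sig + Gam)%type).

Lemma regular_ext (L1 L2 : lang Sig Gam) :
  (forall w, L1 w <-> L2 w) -> regular L1 -> regular L2.
Proof.
move=> H [Q [q0 [d [F HF]]]]; exists Q, q0, d, F => w.
by rewrite -H.
Qed.

Lemma foldl_pair (Q1 Q2 : Type) (d1 : Q1 -> Sig + Gam -> Q1) (d2 : Q2 -> Sig + Gam -> Q2) (w : W) q1 q2 :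
  foldl (fun s c => (d1 s.1 c, d2 s.2 c)) (q1, q2) w = (foldl d1 q1 w, foldl d2 q2 w).
Proof. by elim: w q1 q2 => //= c w IH q1 q2; rewrite IH. Qed.

Lemma regular_and (L1 L2 : lang Sig Gam) :
  regular L1 -> regular L2 -> regular (fun w => L1 w /\ L2 w).
Proof.
move=> [Q1 [q1 [d1 [F1 H1]]]] [Q2 [q2 [d2 [F2 H2]]]].
exists (Q1 * Q2)%type, (q1, q2), (fun s c => (d1 s.1 c, d2 s.2 c)),
  (fun s => F1 s.1 && F2 s.2) => w.
rewrite foldl_pair /= H1 H2; split; first by case=> -> ->.
by move/andP.
Qed.

Lemma regular_lquot (x : W) (L : lang Sig Gam) : regular L -> regular (lquot x L).
Proof.
move=> [Q [q0 [d [F HF]]]]; exists Q, (foldl d q0 x), d, F => w.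
by rewrite /lquot HF foldl_cat.
Qed.

Lemma shift_le (w : W) : shift w <= (size w).-1.
Proof.
elim: w => //= a [|b w] IH //=.
by move: IH => /=; case: (isSig a != isSig b) => /=; rewrite ?add0n ?add1n; case: (size w) => [|n] /=; lia.
Qed.

Lemma shift_cons_full (a : Sig + Gam) (w : W) : shift (a :: w) = size w -> shift w = (size w).-1.
Proof.
case: w => //= b w; have := shift_le (b :: w) => /=.
case: (isSig a != isSig b) => /=; lia.
Qed.

Lemma shift_cat_full (x s : W) : shift (x ++ s) = (size (x ++ s)).-1 -> shift s = (size s).-1.
Proof.
elim: x => //= a x IH H; apply: IH; exact: shift_cons_full H.
Qed.

Lemma inSG_full (u : W) : inSG u -> shift u = (size u).-1.
Proof.
move: {2}(size u) (leqnn (size u)) => n; elim: n u => [|n IH] [|c u] //=.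
case: c => // a; case: u => // -[] // b u /= Hs Hu.
have := IH u; rewrite /= in Hs; move=> /(_ ltac:(lia) Hu).
case: u Hu {Hs} => [|[a'|b'] u] //= Hu -> /=; lia.
Qed.

Lemma shift_cat_le (x y : W) : shift (x ++ y) <= shift x + shift y + 1.
Proof.
elim: x => [|a [|b x] IH] /=; first lia.
  clear IH; case: y => //= c y; case: (isSig a != isSig c); lia.
move: IH => /=; case: (isSig a != isSig b); lia.
Qed.

Lemma shift_cons_le (a : Sig + Gam) (w : W) : shift w <= shift (a :: w).
Proof. case: w => //= b w; lia. Qed.

Lemma shift_drop_le n (w : W) : shift (drop n w) <= shift w.
Proof.
elim: w n => [|a w IH] [|n] //=.
exact: leq_trans (IH n) (shift_cons_le a w).
Qed.

Lemma shift_inl (v : seq Sig) : shift (map (@inl Sig Gam) v) = 0.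
Proof. by elim: v => //= a [|b v] //=. Qed.
Lemma shift_inr (v : seq Gam) : shift (map (@inr Sig Gam) v) = 0.
Proof. by elim: v => //= a [|b v] //=. Qed.

Lemma shift_tail (v : seq Sig) (y : seq Gam) : shift (map inl v ++ map inr y) <= 1.
Proof. by have := shift_cat_le (map inl v) (map inr y); rewrite shift_inl shift_inr. Qed.

End Gen.

Section TReg.
Variables (Sig Gam : finType) (U : lang Sig Gam).
Variables (Q : finType) (q0 : Q) (dl : Q -> Sig + Gam -> Q) (FU : pred Q).
Hypothesis HU : forall w, U w <-> FU (foldl dl q0 w).
Local Notation W := (seq (Sig + Gam)%type).
Local Notation T := (TofU U).

Definition SP (w : W) := exists u (v : seq Sig), U u /\ w = u ++ map inl v.

Lemma SP_T w : SP w -> T w.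
Proof. by case=> u [v [Hu ->]]; exists u, v, [::]; rewrite cats0. Qed.

Lemma SP_rcons_inl w a : SP (rcons w (inl a)) <-> U (rcons w (inl a)) \/ SP w.
Proof.
split.
  case=> u [v [Hu]]; case/lastP: v => [|v a'].
    by rewrite /= cats0 => ->; left.
  rewrite map_rcons -rcons_cat => /rcons_inj [-> _]; right; by exists u, v.
case=> [H|[u [v [Hu ->]]]]; first by exists (rcons w (inl a)), [::]; rewrite cats0.
by exists u, (rcons v a); rewrite map_rcons -rcons_cat.
Qed.

Lemma SP_rcons_inr w b : SP (rcons w (inr b)) <-> U (rcons w (inr b)).
Proof.
split.
  case=> u [v [Hu]]; case/lastP: v => [|v a'].
    by rewrite /= cats0 => ->.
  by rewrite map_rcons -rcons_cat => /rcons_inj [_].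
by move=> H; exists (rcons w (inr b)), [::]; rewrite cats0.
Qed.

Lemma T_rcons_inl w a : T (rcons w (inl a)) <-> U (rcons w (inl a)) \/ SP w.
Proof.
split.
  case=> u [v [y [Hu]]]; case/lastP: y => [|y b'].
    rewrite cats0 => E; apply/SP_rcons_inl; by exists u, v.
  by rewrite map_rcons -!rcons_cat => /rcons_inj [_].
by move/SP_rcons_inl/SP_T.
Qed.

Lemma T_rcons_inr w b : T (rcons w (inr b)) <-> U (rcons w (inr b)) \/ T w.
Proof.
split.
  case=> u [v [y [Hu]]]; case/lastP: y => [|y b'].
    rewrite cats0 => E; left; apply/SP_rcons_inr; by exists u, v.
  rewrite map_rcons -!rcons_cat => /rcons_inj [-> _]; right; by exists u, v, y.
case=> [H|[u [v [y [Hu ->]]]]].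
  by apply: SP_T; apply/SP_rcons_inr.
by exists u, v, (rcons y b); rewrite map_rcons -!rcons_cat.
Qed.

Definition stepT (s : Q * option bool) (c : Sig + Gam) : Q * option bool :=
  let q' := dl s.1 c in
  (q', if FU q' then Some true else
       match s.2, c with
       | Some true, inl _ => Some true
       | Some true, inr _ => Some false
       | Some false, inr _ => Some false
       | _, _ => None end).

Lemma stepT_inv w : let s := foldl stepT (q0, if FU q0 then Some true else None) w in
  s.1 = foldl dl q0 w /\ (s.2 = Some true <-> SP w) /\ (s.2 <> None <-> T w).
Proof.
elim/last_ind: w => [|w c IH] /=.
  have E : U [::] <-> FU q0 by rewrite HU.
  case: ifP => HF; (split; [done|split]).
  - split=> // _; exists [::], [::]; split=> //; exact/E.
  - split=> // _; apply: SP_T; exists [::], [::]; split=> //; exact/E.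
  - split=> // -[u [v [Hu]]]; case: u Hu => [|? ?] //; case: v => // /E; by rewrite HF.
  - split=> // -[u [v [y [Hu]]]]; case: u Hu => [|? ?] //; case: v => //; case: y => // /E; by rewrite HF.
rewrite foldl_rcons; move: IH; set s := foldl _ _ w => -[E1 [E2 E3]].
rewrite /stepT /= E1 -foldl_rcons.
have HUc : U (rcons w c) <-> FU (foldl dl q0 (rcons w c)) by rewrite HU.
case: ifP => HF.
  split=> //; split; split=> // _.
    by exists (rcons w c), [::]; rewrite cats0; split=> //; apply/HUc.
  by apply: SP_T; exists (rcons w c), [::]; rewrite cats0; split=> //; apply/HUc.
have nU : ~ U (rcons w c) by move/HUc; rewrite HF.
split=> //; case: c HUc nU HF => [a|b] HUc nU HF;
  [rewrite SP_rcons_inl T_rcons_inl | rewrite SP_rcons_inr T_rcons_inr];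
  case: (s.2) E2 E3 => [[]|] E2 E3; (split; [split|split]) => //; try tauto;
  try (by move=> [//|/E2 ?]; congruence); try (by move=> [//|/E3 ?]; congruence).
by move=> _; right; apply/E3.
Qed.

Lemma T_regular : regular T.
Proof.
exists (Q * option bool)%type, (q0, if FU q0 then Some true else None), stepT,
  (fun s => s.2 != None) => w.
have [_ [_ E3]] := stepT_inv w.
by rewrite -E3; split=> [/eqP|H]; [|apply/eqP].
Qed.
End TReg.

Section Zz.
Variables (Sig Gam : finType).
Local Notation W := (seq (Sig + Gam)%type).

Fixpoint zzp (p : bool) (w : W) : bool :=
  if w is c :: r then (isSig c == p) && zzp (~~ p) r else true.

Lemma zzp_cat p (x y : W) : zzp p (x ++ y) = zzp p x && zzp (odd (size x) (+) p) y.
Proof.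
elim: x p => //= c x IH p; rewrite IH andbA; congr (_ && zzp _ _).
by rewrite addbN addNb.
Qed.

Lemma inSG_zzpE (u : W) : inSG u = zzp true u && ~~ odd (size u).
Proof.
move: {2}(size u) (leqnn (size u)) => n; elim: n u => [|n IH] [|c u] //=.
case: c => [a|b] /=; last by [].
case: u => [|[a'|b'] u] //= Hs.
rewrite IH /=; last lia.
by rewrite negbK.
Qed.

Lemma inSG_zzp (u : W) : inSG u -> zzp true u.
Proof. by rewrite inSG_zzpE => /andP[]. Qed.

Lemma zzp_inSG (u : W) : zzp true u -> ~~ odd (size u) -> inSG u.
Proof. by rewrite inSG_zzpE => -> ->. Qed.

Definition F (p : bool) (w : W) := filter (fun c => isSig c == p) w.

Lemma F_true w : F true w = map inl (proj_i w).
Proof. by elim: w => //= -[a|b] w IH; rewrite /F /= -/(F _ _) IH. Qed.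
Lemma F_false w : F false w = map inr (proj_o w).
Proof. by elim: w => //= -[a|b] w IH; rewrite /F /= -/(F _ _) IH. Qed.

Lemma sem_F (w w' : W) : sem w = sem w' -> forall p, F p w = F p w'.
Proof. by case=> Ei Eo [|]; rewrite ?F_true ?F_false ?Ei ?Eo. Qed.

Lemma size_sem (w : W) : size w = size (proj_i w) + size (proj_o w).
Proof. by elim: w => //= -[a|b] w IH /=; rewrite IH ?addSn ?addnS. Qed.

Lemma proj_i_cat (x y : W) : proj_i (x ++ y) = proj_i x ++ proj_i y.
Proof. exact: pmap_cat. Qed.
Lemma proj_o_cat (x y : W) : proj_o (x ++ y) = proj_o x ++ proj_o y.
Proof. exact: pmap_cat. Qed.
Lemma proj_i_inl v : proj_i (map (@inl Sig Gam) v) = v.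
Proof. by elim: v => //= a v ->. Qed.
Lemma proj_i_inr v : proj_i (map (@inr Sig Gam) v) = [::].
Proof. by elim: v. Qed.
Lemma proj_o_inl v : proj_o (map (@inl Sig Gam) v) = [::].
Proof. by elim: v. Qed.
Lemma proj_o_inr v : proj_o (map (@inr Sig Gam) v) = v.
Proof. by elim: v => //= a v ->. Qed.

Lemma proj_i_allG (y : W) : all (fun d => isSig d != true) y -> proj_i y = [::].
Proof. by elim: y => //= -[a|b] y IH //= /andP[_ /IH]. Qed.
Lemma proj_o_allS (y : W) : all (fun d => isSig d != false) y -> proj_o y = [::].
Proof. by elim: y => //= -[a|b] y IH //= /andP[_ /IH]. Qed.

Lemma F_all p (y : W) : all (fun d => isSig d != p) y -> F p y = [::].
Proof. by elim: y => //= d y IH /andP[/negbTE H /IH]; rewrite /F /= H. Qed.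

Lemma F_cat p (x y : W) : F p (x ++ y) = F p x ++ F p y.
Proof. exact: filter_cat. Qed.

Lemma split_first p (w : W) : has (fun c => isSig c == p) w ->
  exists y c z, w = y ++ c :: z /\ all (fun d => isSig d != p) y /\ isSig c = p.
Proof.
elim: w => //= d w IH; case: eqP => [Hd _|Hd /IH [y [c [z [-> [Hy Hc]]]]]].
  by exists [::], d, w.
by exists (d :: y), c, z; split=> //=; rewrite Hy andbT; case: eqP Hd.
Qed.
End Zz.

Section Main.
Variables (Sig Gam : finType) (U : lang Sig Gam).
Hypothesis HSG : forall w, U w -> inSG w.
Hypothesis HPC : SG_prefix_closed U.
Hypothesis HT : regular (TofU U).
Local Notation W := (seq (Sig + Gam)%type).
Local Notation T := (TofU U).

Definition Inf (x : W) := forall k, exists s, U (x ++ s) /\ k <= size s.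

Lemma Inf_cat x y : Inf (x ++ y) -> Inf x.
Proof.
move=> H k; have [s [Hs Hk]] := H k; exists (y ++ s); rewrite catA size_cat; split=> //; lia.
Qed.

Lemma Inf_zzp x : Inf x -> zzp true x.
Proof.
move=> H; have [s [/HSG/inSG_zzp Hs _]] := H 0.
by move: Hs; rewrite zzp_cat => /andP[].
Qed.

Lemma last_pair (s : W) : inSG s -> s <> [::] ->
  exists s0 a b, s = s0 ++ [:: inl a; inr b] /\ inSG s0.
Proof.
case/lastP: s => [|s1 c2] // H _; case/lastP: s1 H => [|s0 c1].
  by case: c2.
rewrite inSG_zzpE -!cats1 -catA zzp_cat !size_cat /= => /andP[/andP[H0 H1] Hodd].
have Hs0 : ~~ odd (size s0) by move: Hodd; rewrite addn2 /=; rewrite negbK.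
move: H1; rewrite (negbTE Hs0) /=; case: c1 => // a; case: c2 => // b _.
by exists s0, a, b; split=> //; apply: zzp_inSG.
Qed.

Lemma prefU x s : inSG x -> inSG s -> U (x ++ s) -> U x.
Proof.
move: {2}(size s) (leqnn (size s)) => n; elim: n s => [|n IH] s Hn Hx Hs.
  by case: s Hn Hs => //; rewrite cats0.
case: (s =P [::]) => [->|Hne]; first by rewrite cats0.
have [s0 [a [b [E Hs0]]]] := last_pair Hs Hne.
move=> HU; apply: (IH s0) => //.
  by move: Hn; rewrite E size_cat /=; lia.
apply: (HPC (a := a) (b := b)).
  by rewrite inSG_zzpE zzp_cat size_cat oddD; move: Hx Hs0; rewrite !inSG_zzpE => /andP[-> /negbTE ->] /andP[-> /negbTE ->].
by rewrite -catA -E.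
Qed.

Lemma Inf_U x : Inf x -> inSG x -> U x.
Proof.
move=> H Hx; have [s [Hs _]] := H 0; apply: (prefU (s := s)) => //.
have := HSG Hs; rewrite !inSG_zzpE zzp_cat size_cat oddD.
by move: Hx; rewrite inSG_zzpE => /andP[_ /negbTE ->] /andP[/andP[_ ->] ->].
Qed.

Lemma cat_split (x z u t : W) : x ++ z = u ++ t -> size x <= size u ->
  u = x ++ drop (size x) u /\ z = drop (size x) u ++ t.
Proof.
move=> E Hle; move: E; rewrite -{1}(cat_take_drop (size x) u) -catA => /eqP.
rewrite eqseq_cat; last by rewrite size_takel.
by case/andP=> /eqP Ex /eqP ->; split=> //; rewrite {1}Ex cat_take_drop.
Qed.

Definition FS (x : W) := RegFS (lquot x T).

Lemma FS_iff x : FS x <-> ~ Inf x.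
Proof.
split.
  move=> [_ [k Hk]] HI; have [s [Hs Hsz]] := HI k.+2.
  have HTs : T (x ++ s) by exists (x ++ s), [::], [::]; rewrite !cats0.
  have := Hk s HTs.
  have := inSG_full (HSG Hs); move/shift_cat_full => ->; lia.
move=> HnI; split; first exact: regular_lquot.
have [k Hk] : exists k, forall s, U (x ++ s) -> size s < k.
  apply: NNPP => Hn; apply: HnI => k; apply: NNPP => Hk; apply: Hn; exists k.+1 => s Hs.
  rewrite ltnS leqNgt; apply/negP => Hlt; apply: Hk; exists s; split=> //; lia.
exists (k + 2) => z [u [v [y [Hu E]]]].
case: (leqP (size x) (size u)) => Hle.
  have [Eu Ez] := cat_split E Hle.
  have Hb := Hk _ (eq_ind _ U Hu _ Eu).
  rewrite Ez; apply: leq_trans (shift_cat_le _ _) _.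
  have := shift_le (drop (size x) u); have := shift_tail v y; move: Hb.
  move: (size _) (shift (drop _ _)) (shift (_ ++ _)) => n1 n2 n3; case: n1 => [|n1] /=; lia.
have Ez : z = drop (size x - size u) (map inl v ++ map inr y).
  have : drop (size x) (x ++ z) = drop (size x) (u ++ map inl v ++ map inr y) by rewrite E.
  by rewrite drop_size_cat // drop_cat ltnNge (ltnW Hle).
rewrite Ez; apply: leq_trans (shift_drop_le _ _) _; have := shift_tail v y; lia.
Qed.

Definition Bad (pre : W) (p : bool) (w : W) := exists x y c z,
  w = x ++ y ++ c :: z /\ zzp p x /\ y <> [::] /\
  all (fun d => isSig d != odd (size x) (+) p) y /\
  isSig c = odd (size x) (+) p /\ Inf (pre ++ rcons x c).

Lemma Bad_nil pre p : ~ Bad pre p [::].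
Proof. case=> x [y [c [z [E _]]]]; move: E; case: x => //; case: y => //. Qed.

Lemma Bad_cons pre p d w : isSig d = p ->
  Bad pre p (d :: w) <-> Bad (rcons pre d) (~~ p) w.
Proof.
move=> Hd; split.
  case=> [[|e x1] [y [c [z [E [Hz [Hy [Ha [Hc HI]]]]]]]]].
    case: y E Hy Ha => [|e y] //= [<- _] _; by rewrite Hd eqxx.
  case: E => Ede E; subst e; move: Hz => /= /andP[_ Hz].
  exists x1, y, c, z; rewrite cat_rcons; split=> //; split=> //; split=> //.
  by move: Ha Hc; rewrite /= addNb addbN.
case=> [x1 [y [c [z [E [Hz [Hy [Ha [Hc HI]]]]]]]]].
exists (d :: x1), y, c, z; rewrite E; split=> //; split; first by rewrite /= Hd eqxx.
split=> //; move: Ha Hc HI; rewrite /= addNb addbN cat_rcons; tauto.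
Qed.

Lemma F_cons p0 (c : Sig + Gam) w1 w2 : F p0 (c :: w1) = F p0 (c :: w2) -> F p0 w1 = F p0 w2.
Proof. by rewrite /F /=; case: ifP => // _ [->]. Qed.

Lemma key (X' : W) : forall p pre w r', zzp p X' ->
  (forall p0, F p0 w = F p0 (X' ++ r')) -> Inf (pre ++ X') -> ~ Bad pre p w ->
  take (size X') w = X'.
Proof.
elim: X' => [|c' X'' IH] p pre w r' /=; first by rewrite take0.
case/andP=> /eqP Hc' Hz HF HI HB.
case: w HF HB => [|d w1] HF HB.
  by have := HF p; rewrite /F /= Hc' eqxx.
case: (boolP (isSig d == p)) => Hd.
  have Edc : d = c'.
    by have := HF p; rewrite /F /= Hc' Hd eqxx => -[].
  subst d; congr (_ :: _); apply: (IH (~~ p) (rcons pre c') w1 r') => //.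
  - by move=> p0; apply: F_cons; apply: HF.
  - by rewrite cat_rcons.
  - by move=> HB'; apply: HB; apply/Bad_cons.
exfalso; apply: HB.
have Hhas : has (fun c => isSig c == p) (d :: w1).
  by rewrite has_filter -/(F p _) HF /F /= Hc' eqxx.
have [y [c [z [E [Ha Hc]]]]] := split_first Hhas.
have Ecc : c = c'.
  by have := HF p; rewrite E F_cat (F_all Ha) /F /= Hc eqxx Hc' eqxx => -[].
subst c; exists [::], y, c', z; split=> //; split=> //; split.
  by move=> Hy; subst y; case: E => Ed _; move: Hd; rewrite Ed Hc eqxx.
split=> //; split=> //.
by apply: (@Inf_cat _ X''); rewrite /= -catA.
Qed.

Lemma build x' r w : U x' -> proj_i w = proj_i x' ++ proj_i r ->
  proj_o w = proj_o x' ++ proj_o r ->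
  T (x' ++ map inl (proj_i r) ++ map inr (proj_o r)) /\
  sem (x' ++ map inl (proj_i r) ++ map inr (proj_o r)) = sem w.
Proof.
move=> HU Ei Eo; split; first by exists x', (proj_i r), (proj_o r).
by rewrite /sem !proj_i_cat !proj_o_cat proj_i_inl proj_i_inr proj_o_inl proj_o_inr Ei Eo cats0.
Qed.

Theorem char w : T w -> (maxsync T w <-> ~ Bad [::] true w).
Proof.
move=> Tw; split.
  case=> _ Hmax [x [y [c [z [Ew [Hzx [Hy [Hally [Hc HI]]]]]]]]].
  rewrite cat0s in HI.
  have Hstep : exists w', T w' /\ sem w' = sem w /\ take (size x).+1 w' = rcons x c.
    move: Hally Hc; case Ho: (odd (size x)) => /= Hally Hc.
      case: c Hc HI Ew => // b _ HI Ew.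
      have Hx' : inSG (rcons x (inr b)).
        apply: zzp_inSG; first by rewrite -cats1 zzp_cat Hzx Ho.
        by rewrite size_rcons /= Ho.
      have Ei : proj_i w = proj_i (rcons x (inr b)) ++ proj_i (y ++ z).
        by rewrite Ew !proj_i_cat -cats1 proj_i_cat /= cats0.
      have Eo : proj_o w = proj_o (rcons x (inr b)) ++ proj_o (y ++ z).
        by rewrite Ew !proj_o_cat (proj_o_allS Hally) -cats1 proj_o_cat /= -catA.
      have [T' S'] := build (Inf_U HI Hx') Ei Eo.
      eexists; split; [exact: T'|split; [exact: S'|]].
      by rewrite -(size_rcons x (inr b)) take_size_cat.
    case: c Hc HI Ew => // a _ HI Ew.
    have Hx : inSG x by apply: zzp_inSG; rewrite ?Ho.
    have HIx : Inf x by apply: (@Inf_cat _ [:: inl a]); rewrite cats1.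
    have Ei : proj_i w = proj_i x ++ proj_i (y ++ inl a :: z) by rewrite Ew !proj_i_cat.
    have Eo : proj_o w = proj_o x ++ proj_o (y ++ inl a :: z) by rewrite Ew !proj_o_cat.
    have [T' S'] := build (Inf_U HIx Hx) Ei Eo.
    eexists; split; [exact: T'|split; [exact: S'|]].
    rewrite proj_i_cat (proj_i_allG Hally) /= take_cat ltnNge leqnSn /= subSnn /=.
    by rewrite take0 cats1.
  have [w' [Tw' [Hsem Htake]]] := Hstep.
  have Hi : (size x).+1 <= size w'.
    have [Hi1 Ho1] : proj_i w' = proj_i w /\ proj_o w' = proj_o w by case: Hsem => -> ->.
    rewrite (size_sem w') Hi1 Ho1 -(size_sem w) Ew !size_cat /=; case: y {Ew Hally Hstep} Hy => //= *; lia.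
  have H : FS (take (size x).+1 w) -> FS (take (size x).+1 w') := Hmax w' Tw' Hsem _ Hi.
  have HnFS : ~ FS (take (size x).+1 w') by rewrite Htake => /FS_iff; apply.
  have HIw : Inf (take (size x).+1 w) by apply: NNPP => HnI; apply: HnFS; apply: H; apply/FS_iff.
  case: y Ew Hy Hally {Hstep} => [|d y1] // Ew _ /= /andP[Hd _].
  move: HIw; rewrite Ew take_cat ltnNge leqnSn /= subSnn /= take0.
  move/Inf_zzp; rewrite zzp_cat Hzx /= andbT => Hd'; by rewrite Hd' in Hd.
move=> HnB; split=> // w' Tw' Hsem i Hi.
change (FS (take i w) -> FS (take i w')).
move=> /FS_iff HnI; apply/FS_iff => HI'; apply: HnI.
have Hz := Inf_zzp HI'.
have := @key (take i w') true [::] w (drop i w') Hz _ HI' HnB.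
rewrite size_takel // => -> //.
by move=> p0; rewrite cat_take_drop; apply: sem_F.
Qed.
End Main.

Section Auto.
Variables (Sig Gam : finType) (U : lang Sig Gam).
Variables (Q : finType) (q0 : Q) (dl : Q -> Sig + Gam -> Q) (FU : pred Q).
Hypothesis HU : forall w, U w <-> FU (foldl dl q0 w).
Local Notation W := (seq (Sig + Gam)%type).

Definition InfS (q : Q) : bool :=
  if excluded_middle_informative (forall k, exists s : W, FU (foldl dl q s) /\ k <= size s)
  then true else false.

Lemma InfS_iff (x : W) : InfS (foldl dl q0 x) <-> Inf U x.
Proof.
rewrite /InfS; case: excluded_middle_informative => H; split=> // HI.
- move=> k; have [s [Hs Hk]] := H k; exists s; split=> //; apply/HU; by rewrite foldl_cat.
- exfalso; apply: H => k; have [s [Hs Hk]] := HI k; exists s; split=> //.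
  by rewrite -foldl_cat; apply/HU.
Qed.

Definition stepR (s : ((Q * bool * bool) + bool)%type) (c : Sig + Gam) : ((Q * bool * bool) + bool)%type :=
  match s with
  | inl (q, p, false) => if isSig c == p then inl (dl q c, ~~ p, false) else inl (q, p, true)
  | inl (q, p, true) => if isSig c == p then inr (InfS (dl q c)) else inl (q, p, true)
  | inr b => inr b
  end.

Definition finR (s : ((Q * bool * bool) + bool)%type) : bool := if s is inr b then ~~ b else true.

Lemma stepR_inr b (w : W) : foldl stepR (inr b) w = inr b.
Proof. by elim: w. Qed.

Definition Wait (pre : W) p (w : W) := exists y c z, w = y ++ c :: z /\
  all (fun d => isSig d != p) y /\ isSig c = p /\ Inf U (rcons pre c).

Lemma wait_spec (w : W) : forall pre p,
  finR (foldl stepR (inl (foldl dl q0 pre, p, true)) w) <-> ~ Wait pre p w.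
Proof.
elim: w => [|d w IH] pre p /=.
  split=> // _ [y [c [z [E _]]]]; by case: y E.
case: (boolP (isSig d == p)) => Hd.
  rewrite stepR_inr /= -foldl_rcons.
  have E := InfS_iff (rcons pre d).
  have HW : Wait pre p (d :: w) <-> Inf U (rcons pre d).
    split.
      move=> [y [c [z [Ew [Ha [Hc HI]]]]]]; case: y Ew Ha => [|e y] /=.
        by case=> Ec _ _; rewrite -Ec in HI.
      by case=> Ede _ /andP[]; rewrite -Ede Hd.
    by move=> HI; exists [::], d, w; split=> //; split=> //; split=> //; apply/eqP.
  case: (InfS (foldl dl q0 (rcons pre d))) E => /= E; split=> //.
    by move=> H; exfalso; apply: H; apply/HW; apply/E.
  by move=> _ /HW /E.
rewrite IH.
have HW : Wait pre p (d :: w) <-> Wait pre p w.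
  split.
    move=> [y [c [z [Ew [Ha [Hc HI]]]]]]; case: y Ew Ha => [|e y] /=.
      by case=> Ec _ _; move: Hd; rewrite Ec Hc eqxx.
    case=> _ Ew /andP[_ Ha]; by exists y, c, z.
  move=> [y [c [z [Ew [Ha [Hc HI]]]]]]; exists (d :: y), c, z; rewrite Ew /= Ha Hd.
  by split.
by split=> H1 H2; apply: H1; apply/HW.
Qed.

Lemma active_spec (w : W) : forall pre p,
  finR (foldl stepR (inl (foldl dl q0 pre, p, false)) w) <-> ~ Bad U pre p w.
Proof.
elim: w => [|d w IH] pre p /=.
  by split=> // _; apply: Bad_nil.
case: (boolP (isSig d == p)) => Hd.
  rewrite -foldl_rcons IH.
  have := Bad_cons U pre w (eqP Hd).
  by move=> E; split=> H1 H2; apply: H1; apply/E.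
have -> : foldl stepR (inl (foldl dl q0 pre, p, true)) w =
          foldl stepR (inl (foldl dl q0 pre, p, true)) (d :: w) by rewrite /= (negbTE Hd).
rewrite wait_spec.
have HW : Bad U pre p (d :: w) <-> Wait pre p (d :: w).
  split.
    move=> [[|e x] [y [c [z [Ew [Hz [Hy [Ha [Hc HI]]]]]]]]].
      by exists y, c, z; move: Ha Hc HI; rewrite /= cats1.
    by move: Hz Ew => /= /andP[/eqP He _] [Ede _]; move: Hd; rewrite Ede He eqxx.
  move=> [y [c [z [Ew [Ha [Hc HI]]]]]]; exists [::], y, c, z; split=> //; split=> //.
  split; last by split; [exact: Ha|split; [exact: Hc|rewrite /= cats1]].
  by move=> Hy; subst y; case: Ew => Ed _; move: Hd; rewrite Ed Hc eqxx.
by split=> H1 H2; apply: H1; apply/HW.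
Qed.
End Auto.

Theorem mainTheorem19 (Sig Gam : finType) (U : lang Sig Gam) :
  (forall w, U w -> inSG w) ->
  regular U ->
  SG_prefix_closed U ->
  regular (maxsync (TofU U)).
Proof.
move=> HSG [Q [q0 [dl [FU HU]]]] HPC.
have HT := T_regular HU.
apply: (@regular_ext _ _ (fun w => TofU U w /\ finR (foldl (stepR dl FU) (inl (q0, true, false)) w))).
  move=> w; split=> [[Tw Hf]|Hm].
    apply/(char HSG HPC HT Tw); exact/(active_spec HU w [::] true).
  have Tw : TofU U w by case: Hm.
  split=> //; apply/(active_spec HU w [::] true); exact/(char HSG HPC HT Tw).
apply: regular_and => //.
by exists _, (inl (q0, true, false)), (stepR dl FU), (@finR Q).
Qed.
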